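(* Let $G$ be a finite, simple, connected graph with $res_{wt}(G)=k$. Then every two vertices of $G$ have at most $k-2$ common neighbors.
   Context: $d(x,y)$ is the shortest-path distance. A set $W\subseteq V(G)$ is a resolving set if for every two distinct vertices $y,z$ there is $x\in W$ with $d(y,x)\ne d(z,x)$. A set $W$ is a weak total resolving set (WTR-set) if $W$ is resolving and, for every $w\in W$ and every $x\in V(G)\setminus W$, there is $w'\in W\setminus\{w\}$ with $d(x,w')\ne d(w,w')$. The weak total resolving number $res_{wt}(G)$ is the minimum positive integer $r$ such that every set of $r$ vertices of $G$ is a WTR-set for $G$. *)

(* Defs.v *)
From mathcomp Require Import all_boot.
Set Implicit Arguments. Unset Strict Implicit. Unset Printing Implicit Defensive.

Section Graph.
Variables (T : finType) (e : rel T).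

Definition simple_graph : Prop := symmetric e /\ irreflexive e.
Definition connected_graph : Prop := forall x y : T, connect e x y.

Fixpoint ball (x : T) (n : nat) : {set T} :=
  match n with
  | 0 => [set x]
  | n'.+1 => ball x n' :|: [set z | [exists w in ball x n', e w z]]
  end.

(* shortest-path distance: least n with y in ball x n
   (correct for connected graphs, where d(x,y) < #|T|) *)
Definition dist (x y : T) : nat := find (fun n => y \in ball x n) (iota 0 #|T|).

Definition resolving (W : {set T}) : Prop :=
  forall y z : T, y != z -> exists2 x, x \in W & dist y x != dist z x.

Definition WTR (W : {set T}) : Prop :=
  resolving W /\
  forall w x, w \in W -> x \notin W ->
    exists2 w', w' \in W :\ w & dist x w' != dist w w'.

Definition all_WTR (r : nat) : Prop := forall W : {set T}, #|W| = r -> WTR W.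

Definition res_wt_eq (k : nat) : Prop :=
  0 < k /\ all_WTR k /\ (forall r, 0 < r < k -> ~ all_WTR r).

Definition common_nbrs (x y : T) : {set T} := [set z | e x z && e y z].
End Graph.

(* Main.v *)
Require Import Defs.
From mathcomp Require Import all_boot zify.

Lemma sub_card (T : finType) (A : {set T}) n :
  n <= #|A| -> exists B : {set T}, B \subset A /\ #|B| = n.
Proof.
elim: n => [|n IH] H.
  by exists set0; rewrite sub0set cards0.
have [B [sBA cB]] := IH (ltnW H).
have [a aA aB] : exists2 a, a \in A & a \notin B.
  apply/exists_inP; apply: contraT; rewrite negb_exists_in => /forall_inP Hf.
  have sAB : A \subset B by apply/subsetP => a /Hf; rewrite negbK.
  by move: (subset_leq_card sAB); rewrite cB leqNgt H.
exists (a |: B); split.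
  by rewrite subUset sub1set aA sBA.
by rewrite cardsU1 aB cB.
Qed.

Lemma dist1 (T : finType) (e : rel T) a b :
  e a b -> a != b -> dist e a b = 1.
Proof.
move=> eab nab.
have : 1 < #|T|.
  have := max_card (mem [set a; b]).
  by rewrite cards2 nab.
rewrite /dist; case: #|T| => [|[|n]] // _.
rewrite /= in_set1 eq_sym (negbTE nab) /=.
have -> : b \in ball e a 0 :|: [set z | [exists w in ball e a 0, e w z]].
  by rewrite in_setU; apply/orP; right; rewrite inE; apply/exists_inP; exists a; rewrite ?in_set1.
by [].
Qed.

Theorem lemma2 (T : finType) (e : rel T) (k : nat) :
  simple_graph e -> connected_graph e -> res_wt_eq e k ->
  forall x y : T, x != y -> #|common_nbrs e x y| <= k - 2.
Proof.
move=> [esym eirr] _ [k0 [allk _]] x y nxy.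
set C := common_nbrs e x y.
have dC : forall c, c \in C -> dist e x c = dist e y c.
  move=> c; rewrite inE => /andP [exc eyc].
  rewrite !dist1 //; apply/eqP => E; subst c.
    by rewrite eirr in eyc.
  by rewrite eirr in exc.
have xC : x \notin C by rewrite inE eirr.
have yC : y \notin C by rewrite inE eirr andbF.
rewrite leqNgt; apply/negP => Hlt.
have [Hk | Hk] := leqP k #|C|.
  have [W [sWC cW]] := @sub_card T C k Hk.
  have [R _] := allk W cW.
  have [w wW] := R x y nxy.
  by rewrite dC ?eqxx // (subsetP sWC).
have Hm : #|C| = k.-1 by lia.
have cW : #|x |: C| = k by rewrite cardsU1 xC Hm /=; lia.
have [_ R] := allk _ cW.
have yW : y \notin x |: C by rewrite in_setU1 negb_or eq_sym nxy.
have [w'] := R x y (setU11 x C) yW.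
rewrite in_setD1 in_setU1 => /andP [nw' /orP [/eqP E|wC]].
  by rewrite E eqxx in nw'.
by rewrite dC // eqxx.
Qed.
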